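(* Let $A$ be admissible, let $\ell>0$ with $A(x)=A_\infty$ for all $x\ge\ell$, and let $M:=\max_{x\in\mathbb{R}}|A'(x)/A(x)|$; assume $M>0$. Set $\lambda:=\frac M2e^{-M\ell}\sqrt{1-2M\ell e^{-2M\ell}}$, $\kappa:=\sqrt{\lambda^2+(M/2)^2}$ and $$g_1(x):=\frac{e^{Mx/2}}{\kappa}\big(\kappa\cosh(\kappa x)+(\lambda-M/2)\sinh(\kappa x)\big),\qquad g_2(x):=\frac{e^{Mx/2}}{\kappa}\big(\kappa\cosh(\kappa x)-(\lambda+M/2)\sinh(\kappa x)\big).$$ Then $g_1,g_2>0$ on $[0,\ell]$, $g_1(0)=g_2(0)=1$, and on $[0,\ell]$ $$g_1'-\tfrac M2|g_1-g_2|\ge\lambda g_1,\qquad -g_2'-\tfrac M2|g_1-g_2|\ge\lambda g_2.$$ Consequently, for every $\phi\in C_c^\infty(\mathbb{R})$ with $\operatorname{supp}\phi\subset(0,\infty)$ and $\tau_0:=\max\operatorname{supp}\phi$, the energy satisfies $\mathscr{E}_{\phi,g_1,g_2}(\tau)\le\mathscr{E}_{\phi,g_1,g_2}(\tau_0)e^{-\lambda(\tau-\tau_0)}$ for all $\tau>\tau_0$.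
   Context: A function $A:\mathbb{R}\to\mathbb{R}$ is admissible if $A\in C^\infty(\mathbb{R})$, $A>0$, and there are $x_+>x_->0$ and $A_\infty>0$ with $A(x)=1$ for $x<x_-$ and $A(x)=A_\infty$ for $x>x_+$. $\square_Au:=\partial_t^2u-\frac{1}{A(x)}\partial_x(A(x)\partial_xu)$. For $\phi\in C_c^\infty(\mathbb{R})$ supported in $(0,\infty)$, let $u\in C^\infty([0,\infty)\times\mathbb{R})$ solve $\square_Au=0$ for $x>0$, $t\in\mathbb{R}$; $\partial_xu(0,t)=\phi(t)$; $u(x,t)=0$ for $x>0$, $t<0$. For positive functions $g_1,g_2$ on $[0,\ell]$ the energy is $$\mathscr{E}_{\phi,g_1,g_2}(\tau):=\frac12\int_0^\ell\Big[g_1(x)\big(\partial_tu(x,\tau)+\partial_xu(x,\tau)\big)^2+g_2(x)\big(\partial_tu(x,\tau)-\partial_xu(x,\tau)\big)^2\Big]A(x)\,dx.$$ *)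

(* Defs.v *)
From Stdlib Require Import Reals Lra List.
From Coquelicot Require Import Coquelicot.
Open Scope R_scope.

Definition smooth1 (f : R -> R) : Prop :=
  forall (n : nat) (x : R), ex_derive (Derive_n f n) x.

Definition Dx (u : R -> R -> R) : R -> R -> R :=
  fun x t => Derive (fun y => u y t) x.
Definition Dt (u : R -> R -> R) : R -> R -> R :=
  fun x t => Derive (fun s => u x s) t.

Definition pd (b : bool) (u : R -> R -> R) : R -> R -> R :=
  if b then Dx u else Dt u.
Definition iter_pd (l : list bool) (u : R -> R -> R) : R -> R -> R :=
  fold_right pd u l.

Definition smooth2 (u : R -> R -> R) : Prop :=
  forall (l : list bool) (x t : R),
    ex_derive (fun y => iter_pd l u y t) x /\
    ex_derive (fun s => iter_pd l u x s) t /\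
    continuous (fun p : R * R => iter_pd l u (fst p) (snd p)) (x, t).

Definition admissible (A : R -> R) (Ainf : R) : Prop :=
  smooth1 A /\ (forall x, 0 < A x) /\ 0 < Ainf /\
  exists xm xp : R, 0 < xm /\ xm < xp /\
    (forall x, x < xm -> A x = 1) /\ (forall x, xp < x -> A x = Ainf).

Definition in_supp (phi : R -> R) (t : R) : Prop :=
  forall eps : R, 0 < eps -> exists s, Rabs (s - t) < eps /\ phi s <> 0.

Definition test_fun_pos (phi : R -> R) : Prop :=
  smooth1 phi /\
  (exists Rb : R, forall t, in_supp phi t -> Rabs t <= Rb) /\
  (forall t, in_supp phi t -> 0 < t).

Definition box_A (A : R -> R) (u : R -> R -> R) (x t : R) : R :=
  Dt (Dt u) x t - / A x * Derive (fun y => A y * Dx u y t) x.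

(* u solves the boundary problem with data phi.  u is taken smooth on all
   of R^2 (equivalently, by Seeley extension, smooth on [0,oo) x R). *)
Definition solves (A : R -> R) (phi : R -> R) (u : R -> R -> R) : Prop :=
  smooth2 u /\
  (forall x t, 0 < x -> box_A A u x t = 0) /\
  (forall t, Dx u 0 t = phi t) /\
  (forall x t, 0 < x -> t < 0 -> u x t = 0).

Definition energy (A : R -> R) (u : R -> R -> R) (g1 g2 : R -> R) (l tau : R) : R :=
  / 2 * RInt (fun x =>
     (g1 x * (Dt u x tau + Dx u x tau) ^ 2
      + g2 x * (Dt u x tau - Dx u x tau) ^ 2) * A x) 0 l.

Definition lam (M l : R) : R :=
  M / 2 * exp (- (M * l)) * sqrt (1 - 2 * M * l * exp (- (2 * M * l))).
Definition kap (M l : R) : R := sqrt (lam M l ^ 2 + (M / 2) ^ 2).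

Definition g1f (M l : R) (x : R) : R :=
  exp (M * x / 2) / kap M l *
  (kap M l * cosh (kap M l * x) + (lam M l - M / 2) * sinh (kap M l * x)).
Definition g2f (M l : R) (x : R) : R :=
  exp (M * x / 2) / kap M l *
  (kap M l * cosh (kap M l * x) - (lam M l + M / 2) * sinh (kap M l * x)).

(* Main.v *)
Require Import Defs.
From Stdlib Require Import Reals.
From Coquelicot Require Import Coquelicot.
Open Scope R_scope.
From Stdlib Require Import Lra Psatz.
Import Defs.
Section G.
Variables M l : R.
Hypothesis HM : 0 < M.
Hypothesis Hl : 0 < l.

Lemma lam_ge0 : 0 <= lam M l.
Proof.
  unfold lam. apply Rmult_le_pos; [|apply sqrt_pos].
  apply Rmult_le_pos; [lra| left; apply exp_pos].
Qed.

Lemma lam_le : lam M l <= M/2 * exp (- (M*l)).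
Proof.
  unfold lam.
  assert (H1 : sqrt (1 - 2 * M * l * exp (- (2 * M * l))) <= 1).
  { rewrite <- sqrt_1 at 2. apply sqrt_le_1_alt.
    assert (0 < exp (- (2*M*l))) by apply exp_pos.
    assert (0 < M*l) by (apply Rmult_lt_0_compat; lra).
    assert (0 < 2*M*l*exp (- (2*M*l))) by (repeat apply Rmult_lt_0_compat; lra). lra. }
  assert (0 < exp (- (M*l))) by apply exp_pos.
  rewrite <- (Rmult_1_r (M/2 * exp (- (M*l)))) at 2.
  apply Rmult_le_compat_l; auto. apply Rmult_le_pos; lra.
Qed.

Lemma kap_sq : kap M l * kap M l = lam M l ^ 2 + (M/2)^2.
Proof. unfold kap. apply sqrt_sqrt. nra. Qed.

Lemma kap_ge0 : 0 <= kap M l.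
Proof. unfold kap. apply sqrt_pos. Qed.

Lemma kap_ge_m : M/2 <= kap M l.
Proof. pose proof kap_sq; pose proof kap_ge0; pose proof lam_ge0. nra. Qed.

Lemma kap_ge_lam : lam M l <= kap M l.
Proof. pose proof kap_sq; pose proof kap_ge0; pose proof lam_ge0. nra. Qed.

Lemma kap_pos : 0 < kap M l.
Proof. pose proof kap_ge_m. lra. Qed.

Lemma g1_minus_g2 x : g1f M l x - g2f M l x = exp (M*x/2) / kap M l * (2 * lam M l * sinh (kap M l * x)).
Proof. unfold g1f, g2f. pose proof kap_pos. field. lra. Qed.

Lemma sinh_ge0 y : 0 <= y -> 0 <= sinh y.
Proof. intros. unfold sinh. assert (exp (-y) <= exp y).
  { destruct (Req_dec y 0). subst. rewrite Ropp_0. lra. left; apply exp_increasing; lra. } lra. Qed.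

Lemma g1_ge_g2 x : 0 <= x -> 0 <= g1f M l x - g2f M l x.
Proof. intros. rewrite g1_minus_g2. pose proof kap_pos. pose proof lam_ge0.
  pose proof (exp_pos (M*x/2)). pose proof (sinh_ge0 (kap M l * x)).
  assert (0 <= sinh (kap M l * x)) by (apply H3; nra).
  apply Rmult_le_pos. apply Rlt_le, Rdiv_lt_0_compat; lra. nra. Qed.

Lemma g1_pos x : 0 < g1f M l x.
Proof.
  unfold g1f, cosh, sinh. pose proof kap_pos. pose proof kap_ge_m. pose proof kap_ge_lam.
  pose proof lam_ge0.
  pose proof (exp_pos (M*x/2)). pose proof (exp_pos (kap M l * x)). pose proof (exp_pos (- (kap M l * x))).
  apply Rmult_lt_0_compat. apply Rdiv_lt_0_compat; lra.
  replace (kap M l * ((exp (kap M l * x) + exp (- (kap M l * x))) / 2) +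
   (lam M l - M / 2) * ((exp (kap M l * x) - exp (- (kap M l * x))) / 2)) with
   (((kap M l + lam M l - M/2) * exp (kap M l * x) + (kap M l - lam M l + M/2) * exp (- (kap M l * x)))/2) by field.
  nra.
Qed.

Lemma exp_small : exp ((M*l/2) * exp (- (2*M*l))) < 2.
Proof.
  set (y := M*l). assert (0 < y) by (unfold y; nra).
  set (z := y/2 * exp (-(2*y))).
  assert (Hz : 4 * z < 1).
  { unfold z. assert (1 + 2*y < exp (2*y)) by (apply exp_ineq1; lra).
    assert (exp (-(2*y)) * exp (2*y) = 1) by (rewrite <- exp_plus; replace (-(2*y) + 2*y) with 0 by ring; apply exp_0).
    pose proof (exp_pos (-(2*y))). nra. }
  assert (Hzz : y/2 * exp (- (2*M*l)) = z) by (unfold z, y; replace (2*(M*l)) with (2*M*l) by ring; reflexivity). rewrite Hzz.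
  assert (exp (4*z) < exp 1) by (apply exp_increasing; lra).
  pose proof exp_le_3.
  assert (exp (4*z) = exp z * exp z * exp z * exp z).
  { rewrite <- !exp_plus. f_equal. ring. }
  pose proof (exp_pos z). set (e := exp z) in *. clearbody e.
  destruct (Rlt_or_le e 2) as [h|h]; auto.
  assert (h4 : 4 <= e*e) by (clear -h; nra). assert (16 <= e*e*(e*e)) by (clear - h4; nra). nra.
Qed.

Lemma g2_pos x : x <= l -> 0 < g2f M l x.
Proof.
  intros Hx.
  pose proof kap_pos as HK. pose proof kap_ge_m. pose proof kap_ge_lam.
  pose proof lam_ge0. pose proof lam_le. pose proof kap_sq as Hsq.
  set (K := kap M l) in *. set (L := lam M l) in *. set (m := M/2) in *.
  assert (HeM : exp (- (M*l)) * exp (- (M*l)) = exp (- (2*M*l))).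
  { rewrite <- exp_plus. f_equal. ring. }
  pose proof (exp_pos (- (M*l))) as Hq.
  assert (HL2 : L^2 <= m^2 * exp (- (2*M*l))) by (rewrite <- HeM; nra).
  assert (HKb : K <= m + m * exp (- (2*M*l)) / 2).
  { assert (0 < exp (- (2*M*l))) by apply exp_pos.
    assert (K*K <= (m + m * exp (- (2*M*l)) / 2)^2).
    { assert (exp (- (2*M*l)) <= 1).
      { rewrite <- exp_0. left. apply exp_increasing. nra. }
      unfold m in *. nra. }
    unfold m in *. nra. }
  assert (H2K : 2*K*x <= M*l + (M*l/2) * exp (- (2*M*l))).
  { destruct (Rle_lt_dec x 0).
    - assert (0 < exp (- (2*M*l))) by apply exp_pos.
      assert (0 <= K * (-x)) by (apply Rmult_le_pos; lra).
      assert (0 < M*l) by (apply Rmult_lt_0_compat; lra).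
      assert (0 < M*l * exp (- (2*M*l))) by (apply Rmult_lt_0_compat; lra).
      lra.
    - assert (K*x <= K*l) by (apply Rmult_le_compat_l; lra).
      assert (K*l <= (m + m * exp (- (2*M*l)) / 2)*l) by (apply Rmult_le_compat_r; lra).
      assert ((m + m * exp (- (2*M*l)) / 2)*l*2 = M*l + (M*l/2) * exp (- (2*M*l))) by (unfold m; lra).
      lra. }
  assert (HE : exp (2*K*x) <= exp (M*l) * exp ((M*l/2) * exp (- (2*M*l)))).
  { rewrite <- exp_plus. destruct (Req_dec (2*K*x) (M*l + M*l/2 * exp (- (2*M*l)))) as [e|e].
    rewrite e; lra. left; apply exp_increasing; lra. }
  pose proof exp_small.
  assert (Hinv : exp (- (M*l)) * exp (M*l) = 1).
  { rewrite <- exp_plus. replace (- (M*l) + M*l) with 0 by ring. apply exp_0. }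
  assert (HLE : L * exp (2*K*x) < 2*m).
  { assert (H8 : L * exp (2*K*x) <= m * exp (- (M*l)) * (exp (M*l) * exp ((M*l/2) * exp (- (2*M*l))))).
    { apply Rmult_le_compat; try lra. left; apply exp_pos. }
    assert (0 < m) by (unfold m; lra).
    set (E2 := exp (M*l/2 * exp (- (2*M*l)))) in *.
    replace (m * exp (- (M*l)) * (exp (M*l) * E2)) with (m * E2 * (exp (- (M*l)) * exp (M*l))) in H8 by ring.
    rewrite Hinv in H8.
    assert (m * E2 < m * 2) by (apply Rmult_lt_compat_l; lra). lra. }
  unfold g2f, cosh, sinh. fold K L m.
  pose proof (exp_pos (M*x/2)). pose proof (exp_pos (K * x)) as HE1. pose proof (exp_pos (- (K * x))) as HE2.
  apply Rmult_lt_0_compat. apply Rdiv_lt_0_compat; lra.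
  replace (K * ((exp (K * x) + exp (- (K * x))) / 2) - (L + m) * ((exp (K * x) - exp (- (K * x))) / 2)) with
   (((K - L - m) * exp (K * x) + (K + L + m) * exp (- (K * x)))/2) by field.
  assert (HEE : exp (K*x) * exp (K*x) = exp (2*K*x)) by (rewrite <- exp_plus; f_equal; ring).
  assert (HEF : exp (K*x) * exp (-(K*x)) = 1) by (rewrite <- exp_plus; replace (K*x + - (K*x)) with 0 by ring; apply exp_0).
  assert (0 < m) by (unfold m; lra).
  assert (Hkey : 2*L*m*exp (2*K*x) < (K+L+m)^2) by nra.
  assert (Hkey2 : (K-L-m)*exp (K*x) * exp (K*x) * (K+L+m) + (K+L+m)^2 > 0).
  { replace ((K-L-m)*exp (K*x) * exp (K*x) * (K+L+m)) with (- (2*L*m) * exp (2*K*x)) by (rewrite <- HEE; nra).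
    lra. }
  assert (0 < (K - L - m) * exp (K * x) + (K + L + m) * exp (- (K * x))).
  { apply (Rmult_lt_reg_r (exp (K*x) * (K+L+m))). nra.
    rewrite Rmult_0_l. replace (((K - L - m) * exp (K * x) + (K + L + m) * exp (- (K * x))) * (exp (K * x) * (K + L + m)))
    with ((K-L-m)*exp (K*x) * exp (K*x) * (K+L+m) + (K+L+m)^2 * (exp (K*x) * exp (-(K*x)))) by ring.
    rewrite HEF. lra. }
  lra.
Qed.

Lemma g1_0 : g1f M l 0 = 1.
Proof. unfold g1f, cosh, sinh. pose proof kap_pos. replace (M*0/2) with 0 by field. rewrite !Rmult_0_r, Ropp_0, !exp_0. field. lra. Qed.
Lemma g2_0 : g2f M l 0 = 1.
Proof. unfold g2f, cosh, sinh. pose proof kap_pos. replace (M*0/2) with 0 by field. rewrite !Rmult_0_r, Ropp_0, !exp_0. field. lra. Qed.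

Lemma g1_deriv x : is_derive (g1f M l) x (lam M l * g1f M l x + M/2 * (g1f M l x - g2f M l x)).
Proof.
  pose proof kap_pos. pose proof kap_sq.
  unfold g1f, g2f, cosh, sinh. auto_derive; [lra|].
  change (M * x * / 2) with (M * x / 2).
  set (K := kap M l) in *. set (L := lam M l) in *.
  match goal with |- ?D = ?T => assert (D - T = (K*K - (L^2 + (M/2)^2)) * (exp (M*x/2) * ((exp (K*x) - exp (-(K*x)))/2) / K)) end.
  { field. lra. }
  rewrite H0 in H1. lra.
Qed.

Lemma g2_deriv x : is_derive (g2f M l) x (- lam M l * g2f M l x - M/2 * (g1f M l x - g2f M l x)).
Proof.
  pose proof kap_pos. pose proof kap_sq.
  unfold g1f, g2f, cosh, sinh. auto_derive; [lra|].
  change (M * x * / 2) with (M * x / 2).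
  set (K := kap M l) in *. set (L := lam M l) in *.
  match goal with |- ?D = ?T => assert (D - T = (K*K - (L^2 + (M/2)^2)) * (exp (M*x/2) * ((exp (K*x) - exp (-(K*x)))/2) / K)) end.
  { field. lra. }
  rewrite H0 in H1. lra.
Qed.

End G.

Lemma c2_swap f x t : continuity_2d_pt f x t -> continuity_2d_pt (fun a b => f b a) t x.
Proof.
  intros H eps. destruct (H eps) as [d Hd]. exists d. intros a b Ha Hb. apply Hd; auto.
Qed.

Lemma c2_1 f x t : continuity_2d_pt f x t -> continuous (fun y => f y t) x.
Proof.
  intros H. apply continuity_2d_pt_filterlim in H.
  apply (continuous_comp_2 (fun y : R => y) (fun _ : R => t) f x).
  apply continuous_id. apply continuous_const. exact H.
Qed.

Lemma c2_pow2 f x t : continuity_2d_pt f x t -> continuity_2d_pt (fun a b => f a b ^ 2) x t.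
Proof.
  intros H. apply continuity_2d_pt_ext with (fun a b => f a b * f a b).
  intros; ring. apply continuity_2d_pt_mult; auto.
Qed.

Lemma c2_fun1 (f : R -> R) x t : (forall y, ex_derive f y) -> continuity_2d_pt (fun a _ => f a) x t.
Proof.
  intros H. apply continuity_1d_2d_pt_comp with (g := fun a _ => a).
  apply continuity_pt_filterlim. apply (@ex_derive_continuous R_AbsRing R_NormedModule f x). apply H.
  apply continuity_2d_pt_id1.
Qed.

Section E.
Variables (A : R -> R) (Ainf l M lam0 : R) (g1 g2 : R -> R) (u : R -> R -> R) (phi : R -> R).
Hypothesis HA : admissible A Ainf.
Hypothesis Hl : 0 < l.
Hypothesis HAl : forall x, l <= x -> A x = Ainf.
Hypothesis HMb : forall x, Rabs (Derive A x / A x) <= M.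
Hypothesis Hs : solves A phi u.
Hypothesis Hg1d : forall x, is_derive g1 x (lam0 * g1 x + M/2 * (g1 x - g2 x)).
Hypothesis Hg2d : forall x, is_derive g2 x (- lam0 * g2 x - M/2 * (g1 x - g2 x)).
Hypothesis Hgg : forall x, 0 <= x <= l -> 0 <= g1 x - g2 x.
Hypothesis Hg2l : 0 <= g2 l.
Hypothesis Hg10 : g1 0 = 1.
Hypothesis Hg20 : g2 0 = 1.

Lemma A_pos x : 0 < A x.
Proof. destruct HA as [_ [H _]]. apply H. Qed.
Lemma A_ex x : ex_derive A x.
Proof. destruct HA as [H _]. exact (H 0%nat x). Qed.
Lemma dA_ex x : ex_derive (Derive A) x.
Proof. destruct HA as [H _]. exact (H 1%nat x). Qed.
Lemma A0 : A 0 = 1.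
Proof. destruct HA as [_ [_ [_ [xm [xp [H1 [_ [H _]]]]]]]]. apply H. lra. Qed.
Lemma dA_l x : l < x -> Derive A x = 0.
Proof.
  intros Hx. rewrite (Derive_ext_loc A (fun _ => Ainf)). apply Derive_const.
  assert (Hd : 0 < x - l) by lra. exists (mkposreal _ Hd). intros y Hy.
  apply HAl. cbn in Hy. unfold ball in Hy; cbn in Hy. unfold AbsRing_ball, abs, minus, plus, opp in Hy; cbn in Hy.
  apply Rabs_lt_between in Hy. lra.
Qed.
Lemma g1_ex x : ex_derive g1 x.
Proof. eexists; apply Hg1d. Qed.
Lemma g2_ex x : ex_derive g2 x.
Proof. eexists; apply Hg2d. Qed.

Lemma exx L x t : ex_derive (fun y => iter_pd L u y t) x.
Proof. destruct Hs as [H _]. exact (proj1 (H L x t)). Qed.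
Lemma ext L x t : ex_derive (fun s => iter_pd L u x s) t.
Proof. destruct Hs as [H _]. exact (proj1 (proj2 (H L x t))). Qed.
Lemma cc L x t : continuity_2d_pt (iter_pd L u) x t.
Proof. destruct Hs as [H _]. apply continuity_2d_pt_filterlim. exact (proj2 (proj2 (H L x t))). Qed.


Lemma exx_u (x t : R) : ex_derive (fun y => u y t) x. Proof. exact (exx nil x t). Qed.
Lemma ext_u (x t : R) : ex_derive (fun s => u x s) t. Proof. exact (ext nil x t). Qed.
Lemma exx_t (x t : R) : ex_derive (fun y => Dt u y t) x. Proof. exact (exx (false::nil) x t). Qed.
Lemma ext_t (x t : R) : ex_derive (fun s => Dt u x s) t. Proof. exact (ext (false::nil) x t). Qed.
Lemma exx_x (x t : R) : ex_derive (fun y => Dx u y t) x. Proof. exact (exx (true::nil) x t). Qed.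
Lemma ext_x (x t : R) : ex_derive (fun s => Dx u x s) t. Proof. exact (ext (true::nil) x t). Qed.
Lemma c_u (x t : R) : continuity_2d_pt (fun a b => u a b) x t. Proof. exact (cc nil x t). Qed.
Lemma c_t (x t : R) : continuity_2d_pt (fun a b => Dt u a b) x t. Proof. exact (cc (false::nil) x t). Qed.
Lemma c_x (x t : R) : continuity_2d_pt (fun a b => Dx u a b) x t. Proof. exact (cc (true::nil) x t). Qed.
Lemma c_tt (x t : R) : continuity_2d_pt (fun a b => Dt (Dt u) a b) x t. Proof. exact (cc (false::false::nil) x t). Qed.
Lemma c_xt (x t : R) : continuity_2d_pt (fun a b => Dx (Dt u) a b) x t. Proof. exact (cc (true::false::nil) x t). Qed.
Lemma c_tx (x t : R) : continuity_2d_pt (fun a b => Dt (Dx u) a b) x t. Proof. exact (cc (false::true::nil) x t). Qed.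
Lemma c_xx (x t : R) : continuity_2d_pt (fun a b => Dx (Dx u) a b) x t. Proof. exact (cc (true::true::nil) x t). Qed.

Lemma schw x t : Dx (Dt u) x t = Dt (Dx u) x t.
Proof.
  unfold Dx, Dt. apply (Schwarz u x t).
  - exists (mkposreal 1 Rlt_0_1). intros a b _ _. split; [|split; [|split]].
    + apply exx_u. + apply ext_u. + apply exx_t. + apply ext_x.
  - apply c_xt.
  - apply c_tx.
Qed.

Lemma pde x t : 0 < x -> Dt (Dt u) x t = Dx (Dx u) x t + Derive A x / A x * Dx u x t.
Proof.
  intros Hx. destruct Hs as [_ [H _]]. specialize (H x t Hx). unfold box_A in H.
  rewrite Derive_mult in H by (apply A_ex || apply exx_x).
  pose proof (A_pos x).
  change (Dx (Dx u) x t) with (Derive (fun y => Dx u y t) x).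
  set (D := Derive (fun y => Dx u y t) x) in *.
  assert (Hi: / A x * A x = 1) by (field; lra).
  replace (Derive A x / A x * Dx u x t) with (/ A x * (Derive A x * Dx u x t)) by (unfold Rdiv; ring).
  rewrite Rmult_plus_distr_l in H.
  assert (/ A x * (A x * D) = D) by (rewrite <- Rmult_assoc, Hi; ring).
  lra.
Qed.

Definition w x t := Dt u x t + Dx u x t.
Definition v x t := Dt u x t - Dx u x t.
Definition ee x t := (g1 x * (Dt u x t + Dx u x t) ^ 2 + g2 x * (Dt u x t - Dx u x t) ^ 2) * A x.
Definition De x t := (g1 x * w x t * (Dt (Dt u) x t + Dt (Dx u) x t)
   + g2 x * v x t * (Dt (Dt u) x t - Dt (Dx u) x t)) * A x.
Definition P x t := A x * (g1 x * w x t ^ 2 - g2 x * v x t ^ 2) / 2.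
Definition dP x t := (Derive A x * (g1 x * w x t ^ 2 - g2 x * v x t ^ 2)
   + A x * ((lam0 * g1 x + M/2*(g1 x - g2 x)) * w x t ^2
            + g1 x * (2 * w x t * (Dx (Dt u) x t + Dx (Dx u) x t))
            - ((- lam0 * g2 x - M/2*(g1 x - g2 x)) * v x t ^ 2
               + g2 x * (2 * v x t * (Dx (Dt u) x t - Dx (Dx u) x t))))) / 2.

Lemma ee_dt x t : is_derive (fun s => ee x s) t (2 * De x t).
Proof.
  unfold ee, De, w, v. auto_derive.
  - split; [apply ext_t|]. split; [apply ext_x|]. split; [apply ext_t|]. split; [apply ext_x|]. auto.
  - change (Derive (fun s => Dt u x s) t) with (Dt (Dt u) x t).
    change (Derive (fun s => Dx u x s) t) with (Dt (Dx u) x t). ring.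
Qed.

Lemma P_dx x t : is_derive (fun y => P y t) x (dP x t).
Proof.
  unfold P, dP, w, v. auto_derive.
  - repeat match goal with |- _ /\ _ => split end; try exact I;
    match goal with
    | |- ex_derive (fun _ => A _) _ => apply A_ex
    | |- ex_derive (fun _ => g1 _) _ => apply g1_ex
    | |- ex_derive (fun _ => g2 _) _ => apply g2_ex
    | |- ex_derive (fun _ => Dt u _ _) _ => apply exx_t
    | |- ex_derive (fun _ => Dx u _ _) _ => apply exx_x
    end.
  - change (Derive (fun x0 => g1 x0) x) with (Derive g1 x).
    change (Derive (fun x0 => g2 x0) x) with (Derive g2 x).
    change (Derive (fun x0 => A x0) x) with (Derive A x).
    rewrite (is_derive_unique _ _ _ (Hg1d x)), (is_derive_unique _ _ _ (Hg2d x)).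
    change (Derive (fun y => Dt u y t) x) with (Dx (Dt u) x t).
    change (Derive (fun y => Dx u y t) x) with (Dx (Dx u) x t). field.
Qed.

Ltac c2 :=
 repeat match goal with
 | |- continuity_2d_pt (fun a b => @?f a b + @?g a b) _ _ => apply (continuity_2d_pt_plus f g)
 | |- continuity_2d_pt (fun a b => @?f a b - @?g a b) _ _ => apply (continuity_2d_pt_minus f g)
 | |- continuity_2d_pt (fun a b => @?f a b * @?g a b) _ _ => apply (continuity_2d_pt_mult f g)
 | |- continuity_2d_pt (fun a b => - @?f a b) _ _ => apply (continuity_2d_pt_opp f)
 | |- continuity_2d_pt (fun a b => @?f a b / 2) _ _ =>
     apply (continuity_2d_pt_ext (fun a b => f a b * / 2)); [intros; reflexivity|]
 | |- continuity_2d_pt (fun a b => @?f a b ^ 2) _ _ => apply (c2_pow2 f)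
 | |- continuity_2d_pt (fun a b => Dt u a b) _ _ => apply c_t
 | |- continuity_2d_pt (fun a b => Dx u a b) _ _ => apply c_x
 | |- continuity_2d_pt (fun a b => Dt (Dt u) a b) _ _ => apply c_tt
 | |- continuity_2d_pt (fun a b => Dx (Dt u) a b) _ _ => apply c_xt
 | |- continuity_2d_pt (fun a b => Dt (Dx u) a b) _ _ => apply c_tx
 | |- continuity_2d_pt (fun a b => Dx (Dx u) a b) _ _ => apply c_xx
 | |- continuity_2d_pt (fun a b => g1 a) _ _ => apply (c2_fun1 g1); apply g1_ex
 | |- continuity_2d_pt (fun a b => g2 a) _ _ => apply (c2_fun1 g2); apply g2_ex
 | |- continuity_2d_pt (fun a b => A a) _ _ => apply (c2_fun1 A); apply A_ex
 | |- continuity_2d_pt (fun a b => Derive A a) _ _ => apply (c2_fun1 (Derive A)); apply dA_ex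
 | |- continuity_2d_pt (fun a b => ?c) _ _ => apply continuity_2d_pt_const
 end.

Lemma c_ee x t : continuity_2d_pt ee x t.
Proof. unfold ee. c2. Qed.
Lemma c_De x t : continuity_2d_pt De x t.
Proof. unfold De, w, v. c2. Qed.
Lemma c_dP x t : continuity_2d_pt dP x t.
Proof. unfold dP, w, v. c2. Qed.

Lemma ex_ee t : ex_RInt (fun x => ee x t) 0 l.
Proof. apply (@ex_RInt_continuous R_CompleteNormedModule). intros z _. apply (c2_1 ee). apply c_ee. Qed.
Lemma ex_De t : ex_RInt (fun x => De x t) 0 l.
Proof. apply (@ex_RInt_continuous R_CompleteNormedModule). intros z _. apply (c2_1 De). apply c_De. Qed.
Lemma ex_dP t : ex_RInt (fun x => dP x t) 0 l.
Proof. apply (@ex_RInt_continuous R_CompleteNormedModule). intros z _. apply (c2_1 dP). apply c_dP. Qed.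

Lemma E_deriv t : is_derive (fun s => energy A u g1 g2 l s) t (RInt (fun x => De x t) 0 l).
Proof.
  apply is_derive_ext with (fun s => / 2 * RInt (fun x => ee x s) 0 l).
  { intros; reflexivity. }
  assert (HR : RInt (fun x => Derive (fun s => ee x s) t) 0 l = 2 * RInt (fun x => De x t) 0 l).
  { rewrite (RInt_ext _ (fun x => 2 * De x t)).
    - apply (RInt_scal (V:=R_CompleteNormedModule) (fun x => De x t) 0 l 2). apply ex_De.
    - intros x _. apply is_derive_unique. apply ee_dt. }
  replace (RInt (fun x => De x t) 0 l) with (/2 * RInt (fun x => Derive (fun s => ee x s) t) 0 l)
    by (rewrite HR; field).
  apply is_derive_scal.
  apply (is_derive_RInt_param (fun s x => ee x s) 0 l t).
  - apply filter_forall. intros s x _. eexists. apply ee_dt.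
  - intros x _. apply continuity_2d_pt_ext with (fun t' x' => 2 * De x' t').
    + intros t' x'. symmetry. apply is_derive_unique. apply ee_dt.
    + apply (c2_swap (fun x' t' => 2 * De x' t')). c2. apply c_De.
  - apply filter_forall. intros s. apply ex_ee.
Qed.

Lemma interior x t : 0 < x < l -> De x t <= dP x t - lam0 / 2 * ee x t.
Proof.
  intros Hx.
  pose proof (A_pos x) as HAx.
  assert (Hg : 0 <= g1 x - g2 x) by (apply Hgg; lra).
  assert (Ha : - M <= Derive A x / A x <= M) by (apply Rabs_le_between; apply HMb).
  unfold De, dP, ee, w, v. rewrite (schw x t), (pde x t) by lra.
  set (a := Derive A x / A x) in *.
  assert (HdA : Derive A x = a * A x) by (unfold a; field; lra).
  rewrite HdA.
  set (p := Dt u x t). set (q := Dx u x t). set (c := Dt (Dx u) x t). set (b := Dx (Dx u) x t).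
  set (G1 := g1 x) in *. set (G2 := g2 x) in *. set (AA := A x) in *.
  match goal with |- ?L <= ?R => assert (E : R - L = AA * (G1 - G2) * (((M + a) * ((p+q)+(p-q))^2 + (M - a) * ((p+q)-(p-q))^2) / 8)) end.
  { unfold a. field. lra. }
  assert (0 <= AA * (G1 - G2) * (((M + a) * ((p+q)+(p-q))^2 + (M - a) * ((p+q)-(p-q))^2) / 8)).
  { apply Rmult_le_pos. apply Rmult_le_pos; lra.
    assert (0 <= (M + a) * ((p+q)+(p-q))^2) by (apply Rmult_le_pos; [lra| apply pow2_ge_0]).
    assert (0 <= (M - a) * ((p+q)-(p-q))^2) by (apply Rmult_le_pos; [lra| apply pow2_ge_0]).
    lra. }
  lra.
Qed.

Lemma loc_pos (y : R) : 0 < y -> locally y (fun z => 0 < z).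
Proof.
  intros Hy. exists (mkposreal _ Hy). intros z Hz.
  unfold ball in Hz; cbn in Hz. unfold AbsRing_ball, abs, minus, plus, opp in Hz; cbn in Hz.
  apply Rabs_lt_between in Hz. cbn in Hz. lra.
Qed.
Lemma loc_neg (y : R) : y < 0 -> locally y (fun z => z < 0).
Proof.
  intros Hy. assert (Hy' : 0 < - y) by lra. exists (mkposreal _ Hy'). intros z Hz.
  unfold ball in Hz; cbn in Hz. unfold AbsRing_ball, abs, minus, plus, opp in Hz; cbn in Hz.
  apply Rabs_lt_between in Hz. cbn in Hz. lra.
Qed.

Lemma w_zero_neg x s : 0 < x -> s < 0 -> w x s = 0.
Proof.
  intros Hx Hs0. destruct Hs as [_ [_ [_ H0]]]. unfold w, Dt, Dx.
  rewrite (Derive_ext_loc (fun s' => u x s') (fun _ => 0)).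
  rewrite (Derive_ext_loc (fun y => u y s) (fun _ => 0)).
  rewrite !Derive_const. ring.
  - apply (filter_imp (fun z => 0 < z)); [|apply loc_pos; auto]. intros z Hz. apply H0; auto.
  - apply (filter_imp (fun z => z < 0)); [|apply loc_neg; auto]. intros z Hz. apply H0; auto.
Qed.

Lemma w_dx a b : is_derive (fun z => w z b) a (Dx (Dt u) a b + Dx (Dx u) a b).
Proof.
  unfold w. auto_derive.
  - split; [apply exx_t|]. split; [apply exx_x|]. exact I.
  - change (Derive (fun z => Dt u z b) a) with (Dx (Dt u) a b).
    change (Derive (fun z => Dx u z b) a) with (Dx (Dx u) a b). ring.
Qed.
Lemma w_dt a b : is_derive (fun z => w a z) b (Dt (Dt u) a b + Dt (Dx u) a b).
Proof.
  unfold w. auto_derive.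
  - split; [apply ext_t|]. split; [apply ext_x|]. exact I.
  - change (Derive (fun z => Dt u a z) b) with (Dt (Dt u) a b).
    change (Derive (fun z => Dx u a z) b) with (Dt (Dx u) a b). ring.
Qed.

Lemma c_w x t : continuity_2d_pt w x t.
Proof. unfold w. c2. Qed.

Lemma w_l t : w l t = 0.
Proof.
  set (psi := fun r => w (l + r) (t - r)).
  set (R0 := Rabs t + 1).
  assert (HR0 : 0 < R0) by (unfold R0; pose proof (Rabs_pos t); lra).
  assert (Hd : forall r, 0 < r -> is_derive psi r 0).
  { intros r Hr.
    assert (Hf : filterdiff (fun p : R * R => w (fst p) (snd p)) (locally (l + r, t - r))
       (fun p : R * R => plus (scal (fst p) (Dx (Dt u) (l+r) (t-r) + Dx (Dx u) (l+r) (t-r)))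
                              (scal (snd p) (Dt (Dt u) (l+r) (t-r) + Dt (Dx u) (l+r) (t-r))))).
    { apply (is_derive_filterdiff w (l+r) (t-r) (fun a b => Dx (Dt u) a b + Dx (Dx u) a b)).
      - apply filter_forall. intros p. apply w_dx.
      - apply w_dt.
      - apply (continuity_2d_pt_filterlim (fun a b => Dx (Dt u) a b + Dx (Dx u) a b)). c2. }
    apply filterdiff_differentiable_pt_lim in Hf.
    apply is_derive_Reals.
    assert (H2 : derivable_pt_lim (fun r => l + r) r 1).
    { apply is_derive_Reals. auto_derive; auto. }
    assert (H3 : derivable_pt_lim (fun r => t - r) r (-1)).
    { apply is_derive_Reals. auto_derive; auto. }
    pose proof (derivable_pt_lim_comp_2d w (fun r => l + r) (fun r => t - r) r _ _ _ _ Hf H2 H3) as Hc.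
    replace 0 with ((Dx (Dt u) (l + r) (t - r) + Dx (Dx u) (l + r) (t - r)) * 1 +
      (Dt (Dt u) (l + r) (t - r) + Dt (Dx u) (l + r) (t - r)) * -1).
    exact Hc.
    rewrite (pde (l+r) (t-r)) by lra. rewrite (dA_l (l+r)) by lra. rewrite schw. unfold Rdiv. ring. }
  assert (Hc : forall r, continuity_pt psi r).
  { intros r. apply continuity_pt_filterlim.
    apply (continuous_comp_2 (fun r => l + r) (fun r => t - r) w).
    - apply (@ex_derive_continuous R_AbsRing R_NormedModule). auto_derive; auto.
    - apply (@ex_derive_continuous R_AbsRing R_NormedModule). auto_derive; auto.
    - apply (continuity_2d_pt_filterlim w). apply c_w. }
  destruct (MVT_gen psi 0 R0 (fun _ => 0)) as [c [_ Hm]].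
  - intros r Hr. rewrite Rmin_left in Hr by lra. apply Hd. lra.
  - intros r _. apply Hc.
  - unfold psi in Hm. rewrite Rplus_0_r, Rminus_0_r in Hm.
    rewrite (w_zero_neg (l + R0) (t - R0)) in Hm.
    + lra.
    + lra.
    + unfold R0. pose proof (Rle_abs t). lra.
Qed.

Lemma RInt_bound t : phi t = 0 -> RInt (fun x => De x t) 0 l <= - lam0 * energy A u g1 g2 l t.
Proof.
  intros Hphi.
  change (energy A u g1 g2 l t) with (/ 2 * RInt (fun x => ee x t) 0 l).
  assert (Hc : forall x, continuity_2d_pt (fun a b => dP a b - lam0 / 2 * ee a b) x t).
  { intros x. apply (continuity_2d_pt_minus dP). apply c_dP.
    apply (continuity_2d_pt_mult (fun _ _ => lam0 / 2) ee). apply continuity_2d_pt_const. apply c_ee. }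
  assert (Hex : ex_RInt (fun x => dP x t - lam0 / 2 * ee x t) 0 l).
  { apply (@ex_RInt_continuous R_CompleteNormedModule). intros z _.
    apply (c2_1 (fun a b => dP a b - lam0 / 2 * ee a b)). apply Hc. }
  assert (H1 : RInt (fun x => De x t) 0 l <= RInt (fun x => dP x t - lam0 / 2 * ee x t) 0 l).
  { apply RInt_le. lra. apply ex_De. exact Hex. intros x Hx. apply interior. exact Hx. }
  assert (H3 : is_RInt (fun x => dP x t) 0 l (minus (P l t) (P 0 t))).
  { apply (is_RInt_derive (fun y => P y t) (fun x => dP x t)).
    - intros x _. apply P_dx.
    - intros x _. apply (c2_1 dP). apply c_dP. }
  assert (H2 : RInt (fun x => dP x t - lam0 / 2 * ee x t) 0 l = (P l t - P 0 t) - lam0 / 2 * RInt (fun x => ee x t) 0 l).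
  { apply is_RInt_unique.
    apply (is_RInt_minus (V:=R_NormedModule) (fun x => dP x t) (fun x => lam0 / 2 * ee x t)).
    exact H3.
    apply (is_RInt_scal (V:=R_NormedModule) (fun x => ee x t)).
    apply (RInt_correct (V:=R_CompleteNormedModule)). apply ex_ee. }
  assert (H4 : P 0 t = 0).
  { unfold P, w, v. destruct Hs as [_ [_ [Hb _]]]. rewrite Hb, Hphi, Hg10, Hg20. rewrite Rplus_0_r, Rminus_0_r. unfold Rminus. rewrite Rplus_opp_r. field. }
  assert (H5 : P l t <= 0).
  { unfold P. rewrite w_l. pose proof (A_pos l).
    assert (0 <= A l * (g2 l * v l t ^ 2)).
    { apply Rmult_le_pos. lra. apply Rmult_le_pos. auto. apply pow2_ge_0. }
    lra. }
  lra.
Qed.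

Lemma decay tau0 tau : (forall s, tau0 < s -> phi s = 0) -> tau0 < tau ->
  energy A u g1 g2 l tau <= energy A u g1 g2 l tau0 * exp (- (lam0 * (tau - tau0))).
Proof.
  intros Hphi Htau.
  set (E := fun s => energy A u g1 g2 l s).
  set (h := fun s => E s * exp (lam0 * (s - tau0))).
  set (h' := fun s => (RInt (fun x => De x s) 0 l + lam0 * E s) * exp (lam0 * (s - tau0))).
  assert (Hd : forall c, is_derive h c (h' c)).
  { intros c. unfold h, h'.
    pose proof (E_deriv c) as HE. fold E in HE.
    apply (is_derive_ext (fun s => mult (E s) (exp (lam0 * (s - tau0))))). { intros; reflexivity. }
    replace ((RInt (fun x => De x c) 0 l + lam0 * E c) * exp (lam0 * (c - tau0)))
      with (plus (mult (RInt (fun x => De x c) 0 l) (exp (lam0 * (c - tau0)))) (mult (E c) (lam0 * exp (lam0 * (c - tau0))))).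
    2: { unfold plus, mult; cbn. ring. }
    apply (is_derive_mult (K:=R_AbsRing) E (fun s => exp (lam0 * (s - tau0)))). exact HE.
    auto_derive; auto. rewrite Rmult_1_r. reflexivity.
    intros; apply Rmult_comm. }
  destruct (MVT_cor2 h h' tau0 tau Htau) as [c [Hm Hcin]].
  { intros c _. apply is_derive_Reals. apply Hd. }
  assert (Hh' : h' c <= 0).
  { unfold h'. pose proof (RInt_bound c (Hphi c (proj1 Hcin))). fold E in H.
    pose proof (exp_pos (lam0 * (c - tau0))).
    unfold E.
    assert (0 <= - (RInt (fun x => De x c) 0 l + lam0 * energy A u g1 g2 l c)) by lra.
    assert (0 <= - (RInt (fun x => De x c) 0 l + lam0 * energy A u g1 g2 l c) * exp (lam0 * (c - tau0)))
      by (apply Rmult_le_pos; lra).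
    lra. }
  assert (Hle : h tau <= h tau0) by nra.
  unfold h in Hle. replace (lam0 * (tau0 - tau0)) with 0 in Hle by ring. rewrite exp_0, Rmult_1_r in Hle.
  fold E.
  assert (Hx : exp (lam0 * (tau - tau0)) * exp (- (lam0 * (tau - tau0))) = 1).
  { rewrite <- exp_plus. replace (lam0 * (tau - tau0) + - (lam0 * (tau - tau0))) with 0 by ring. apply exp_0. }
  pose proof (exp_pos (- (lam0 * (tau - tau0)))).
  replace (E tau) with (E tau * exp (lam0 * (tau - tau0)) * exp (- (lam0 * (tau - tau0)))).
  apply Rmult_le_compat_r; lra.
  rewrite Rmult_assoc, Hx. ring.
Qed.

End E.

Theorem mainTheorem11 (A : R -> R) (Ainf l M : R) :
  admissible A Ainf ->
  0 < l ->
  (forall x, l <= x -> A x = Ainf) ->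
  (forall x, Rabs (Derive A x / A x) <= M) ->
  (exists x0, Rabs (Derive A x0 / A x0) = M) ->
  0 < M ->
  (forall x, 0 <= x <= l -> 0 < g1f M l x /\ 0 < g2f M l x) /\
  g1f M l 0 = 1 /\ g2f M l 0 = 1 /\
  (forall x, 0 <= x <= l ->
     Derive (g1f M l) x - M / 2 * Rabs (g1f M l x - g2f M l x)
       >= lam M l * g1f M l x /\
     - Derive (g2f M l) x - M / 2 * Rabs (g1f M l x - g2f M l x)
       >= lam M l * g2f M l x) /\
  (forall (phi : R -> R) (u : R -> R -> R) (tau0 : R),
     test_fun_pos phi ->
     in_supp phi tau0 -> (forall t, in_supp phi t -> t <= tau0) ->
     solves A phi u ->
     forall tau, tau0 < tau ->
       energy A u (g1f M l) (g2f M l) l tau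
         <= energy A u (g1f M l) (g2f M l) l tau0 * exp (- (lam M l * (tau - tau0)))).
Proof.
  intros HA Hl HAl HMb _ HM.
  split; [|split; [|split; [|split]]].
  - intros x Hx. split. apply g1_pos; auto. apply g2_pos; auto. lra.
  - apply g1_0; auto.
  - apply g2_0; auto.
  - intros x Hx.
    rewrite (is_derive_unique _ _ _ (g1_deriv M l HM x)).
    rewrite (is_derive_unique _ _ _ (g2_deriv M l HM x)).
    pose proof (g1_ge_g2 M l HM x (proj1 Hx)).
    rewrite Rabs_right by lra. split; lra.
  - intros phi u tau0 _ _ Hmax Hsol tau Htau.
    assert (Hphi : forall s, tau0 < s -> phi s = 0).
    { intros s Hs. destruct (Req_dec (phi s) 0) as [e|e]; auto. exfalso.
      assert (in_supp phi s).
      { intros eps Heps. exists s. split; auto. rewrite Rminus_eq_0, Rabs_R0. auto. }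
      specialize (Hmax s H). lra. }
    eapply decay; eauto.
    + intros x. apply g1_deriv; auto.
    + intros x. apply g2_deriv; auto.
    + intros x Hx. apply g1_ge_g2; auto. lra.
    + left. apply g2_pos; auto. lra.
    + apply g1_0; auto.
    + apply g2_0; auto.
Qed.
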